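(* Assume (H1'), let $\phi$ be a sub-additive admissible policy, $r\in\mathbb N_+$, and $z^1,\dots,z^r$ (possibly identical) strong erasing words for $(G,\phi)$, with $m=\sum_{i=1}^r|z^i|/2$. Let $$\mathscr B^r(z^1,\dots,z^r)=\{V^0V^1\,V^0\circ\theta\,V^1\circ\theta\cdots V^0\circ\theta^{m-1}V^1\circ\theta^{m-1}=z^1z^2\cdots z^r\},\qquad \mathscr C^r_n=\mathscr A_n(\emptyset)\cap\theta^{-n}\mathscr B^r(z^1,\dots,z^r).$$ Then for every $Y\in\mathscr Y_2^r$ and every $n\ge1$, $\mathscr C^r_n\subset\mathscr A_{n+m}(Y)$ up to a $\mathbb P^0$-null set.
   Context: $G=(\mathcal V,\mathcal E)$ finite connected simple graph; $\mathcal S$ the set of lists of preferences (for each class a linear ordering of its neighbours); $\phi$ a policy with probability $\nu_\phi$ on $\mathcal S$; $\mathbb W=\{w\in\mathcal V^*:|w|_i|w|_j=0\text{ whenever } i,j\text{ adjacent}\}$, $\mathbb W_2$ its even-length words; admissible $\phi$: map $\odot_\phi$ with $w\odot_\phi(v,\sigma)=wv$ if no letter of $w$ is adjacent to $v$, else $w$ with one letter adjacent to $v$ (chosen by $\phi$) deleted; $Q_\phi(z_1\cdots z_k,\varsigma_1\cdots\varsigma_k)=(\cdots(\emptyset\odot_\phi(z_1,\varsigma_1))\cdots)\odot_\phi(z_k,\varsigma_k)$. Sub-additive: $|Q_\phi(z'z'',\varsigma'\varsigma'')|\le|Q_\phi(z',\varsigma')|+|Q_\phi(z'',\varsigma'')|$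 for all words with preferences in the support of $\nu_\phi$. Strong erasing word: $z$ of even length $2p$ such that $Q_\phi(ijz,\varsigma\varsigma')=\emptyset$ for all non-adjacent $i,j$ (possibly equal) and $Q_\phi(z_{2\ell+1}\cdots z_{2p},\varsigma'_{2\ell+1}\cdots\varsigma'_{2p})=\emptyset$ for $\ell=0,\dots,p-1$, for all preference words with letters in the support of $\nu_\phi$. (H1'): $(V_{2n},\Sigma_{2n},V_{2n+1},\Sigma_{2n+1})_{n\in\mathbb Z}$ stationary ergodic with $V_{2n}\sim\mu^0$, $V_{2n+1}\sim\mu^1$, $\Sigma_m\sim\nu_\phi$, $(\mu^0+\mu^1)/2$ of full support; canonical space $\Omega^0$ with law $\mathbb P^0$, shift $\theta$, and $0$-coordinate $(V^0,\Sigma^0,V^1,\Sigma^1)$. $U^{[Y]}_0=Y$, $U^{[Y]}_{n+1}=(U^{[Y]}_n\odot_\phi(V^0\circ\theta^n,\Sigma^0\circ\theta^n))\odot_\phi(V^1\circ\theta^n,\Sigma^1\circ\theta^n)$; $\mathscr A_n(Y)=\{U^{[Y]}_n=\emptyset\}$. $\mathscr Y_2^r$ is the set of $\mathbb W_2$-valued r.v.'s $Y$ with $|Y|\le2r$ a.s. *)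

(* Defs.v *)
From Stdlib Require Import Reals List Arith ZArith Relations.
Import ListNotations.
Set Implicit Arguments.

Section Defs.
Variable V : Type.
Variable eqdec : forall x y : V, {x = y} + {x <> y}.
Variable adj : V -> V -> Prop.

Definition simple_finite_connected_graph : Prop :=
  (exists l : list V, forall v, In v l) /\
  (forall i j, adj i j -> adj j i) /\
  (forall i, ~ adj i i) /\
  (forall i j, clos_refl_trans V adj i j).

(** a list of preferences: for each class i a linear ordering (a duplicate-free
    list) of its neighbours *)
Definition valid_pref (s : V -> list V) : Prop :=
  forall i, NoDup (s i) /\ (forall j, In j (s i) <-> adj i j).

Definition Pref : Type := { s : V -> list V | valid_pref s }.

Definition inW (w : list V) : Prop :=
  forall i j, adj i j -> (count_occ eqdec w i * count_occ eqdec w j = 0)%nat.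

Definition inW2 (w : list V) : Prop := inW w /\ Nat.Even (length w).

Definition admissible (odot : list V -> V -> Pref -> list V) : Prop :=
  forall w v s, inW w ->
    ((forall u, In u w -> ~ adj u v) -> odot w v s = w ++ [v]) /\
    ((exists u, In u w /\ adj u v) ->
       exists k, (k < length w)%nat /\ adj (nth k w v) v /\
                 odot w v s = firstn k w ++ skipn (S k) w).

Definition Qphi (odot : list V -> V -> Pref -> list V)
  (z : list V) (sg : list Pref) : list V :=
  fold_left (fun w p => odot w (fst p) (snd p)) (combine z sg) [].

Definition in_supp (nu : Pref -> R) (s : Pref) : Prop := (0 < nu s)%R.

Definition all_in_supp (nu : Pref -> R) (sg : list Pref) : Prop :=
  forall s, In s sg -> in_supp nu s.

Definition sub_additive (odot : list V -> V -> Pref -> list V) (nu : Pref -> R) : Prop :=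
  forall z' z'' sg' sg'',
    length z' = length sg' -> length z'' = length sg'' ->
    all_in_supp nu (sg' ++ sg'') ->
    (length (Qphi odot (z' ++ z'') (sg' ++ sg''))
       <= length (Qphi odot z' sg') + length (Qphi odot z'' sg''))%nat.

Definition strong_erasing (odot : list V -> V -> Pref -> list V) (nu : Pref -> R)
  (z : list V) : Prop :=
  exists p : nat, length z = (2 * p)%nat /\
    forall (i j : V) (sg sg' : list Pref),
      ~ adj i j -> length sg = 2%nat -> length sg' = (2 * p)%nat ->
      all_in_supp nu sg -> all_in_supp nu sg' ->
      Qphi odot (i :: j :: z) (sg ++ sg') = [] /\
      (forall l, (l < p)%nat ->
         Qphi odot (skipn (2 * l) z) (skipn (2 * l) sg') = []).

Record coord : Type := Coord { cV0 : V; cS0 : Pref; cV1 : V; cS1 : Pref }.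

Definition Omega0 : Type := Z -> coord.

Definition theta (om : Omega0) : Omega0 := fun k => om (k + 1)%Z.
Definition thetan (n : nat) (om : Omega0) : Omega0 := Nat.iter n theta om.

Definition V0 (om : Omega0) : V := cV0 (om 0%Z).
Definition Sg0 (om : Omega0) : Pref := cS0 (om 0%Z).
Definition V1 (om : Omega0) : V := cV1 (om 0%Z).
Definition Sg1 (om : Omega0) : Pref := cS1 (om 0%Z).

Definition sigma_algebra {T : Type} (F : (T -> Prop) -> Prop) : Prop :=
  F (fun _ => True) /\
  (forall E, F E -> F (fun t => ~ E t)) /\
  (forall E : nat -> T -> Prop, (forall n, F (E n)) -> F (fun t => exists n, E n t)).

Definition measurable (E : Omega0 -> Prop) : Prop :=
  forall F : (Omega0 -> Prop) -> Prop, sigma_algebra F ->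
    (forall (k : Z) (c : coord), F (fun om => om k = c)) -> F E.

Definition probability (P : (Omega0 -> Prop) -> R) : Prop :=
  P (fun _ => True) = 1%R /\
  (forall E, measurable E -> (0 <= P E)%R) /\
  (forall E : nat -> Omega0 -> Prop,
     (forall n, measurable (E n)) ->
     (forall n m om, n <> m -> E n om -> E m om -> False) ->
     infinite_sum (fun n => P (E n)) (P (fun om => exists n, E n om))).

Definition H1' (P : (Omega0 -> Prop) -> R) (mu0 mu1 : V -> R) (nu : Pref -> R) : Prop :=
  probability P /\
  (forall E, measurable E -> P (fun om => E (theta om)) = P E) /\
  (forall E, measurable E -> (forall om, E (theta om) <-> E om) ->
     P E = 0%R \/ P E = 1%R) /\
  (* marginals: V_{2n} ~ mu0, V_{2n+1} ~ mu1, Sigma_m ~ nu *)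
  (forall (k : Z) v, P (fun om => cV0 (om k) = v) = mu0 v) /\
  (forall (k : Z) v, P (fun om => cV1 (om k) = v) = mu1 v) /\
  (forall (k : Z) s, P (fun om => cS0 (om k) = s) = nu s) /\
  (forall (k : Z) s, P (fun om => cS1 (om k) = s) = nu s) /\
  (forall v, (0 < (mu0 v + mu1 v) / 2)%R).

Fixpoint U (odot : list V -> V -> Pref -> list V) (Y : Omega0 -> list V)
  (n : nat) (om : Omega0) : list V :=
  match n with
  | O => Y om
  | S n' =>
      let w := U odot Y n' om in
      let om' := thetan n' om in
      odot (odot w (V0 om') (Sg0 om')) (V1 om') (Sg1 om')
  end.

Definition Aev (odot : list V -> V -> Pref -> list V) (Y : Omega0 -> list V)
  (n : nat) (om : Omega0) : Prop := U odot Y n om = [].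

Definition Bev (zs : list (list V)) (m : nat) (om : Omega0) : Prop :=
  flat_map (fun k => [V0 (thetan k om); V1 (thetan k om)]) (seq 0 m) = concat zs.

Definition half_total_length (zs : list (list V)) : nat :=
  Nat.div (list_sum (map (@length V) zs)) 2.

Definition Cev (odot : list V -> V -> Pref -> list V) (zs : list (list V))
  (n : nat) (om : Omega0) : Prop :=
  Aev odot (fun _ => []) n om /\ Bev zs (half_total_length zs) (thetan n om).

Definition null (P : (Omega0 -> Prop) -> R) (N : Omega0 -> Prop) : Prop :=
  measurable N /\ P N = 0%R.

Definition subset_ae (P : (Omega0 -> Prop) -> R) (E F : Omega0 -> Prop) : Prop :=
  exists N, null P N /\ forall om, E om -> ~ N om -> F om.

Definition in_Y2r (P : (Omega0 -> Prop) -> R) (r : nat) (Y : Omega0 -> list V) : Prop :=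
  (forall w, measurable (fun om => Y om = w)) /\
  (forall om, inW2 (Y om)) /\
  (exists N, null P N /\ forall om, ~ N om -> (length (Y om) <= 2 * r)%nat).

End Defs.

(* Main.v *)
Require Import Defs.
From Stdlib Require Import Reals List Arith ZArith Relations Lia Lra Psatz.
From Stdlib Require Import Classical ClassicalEpsilon FunctionalExtensionality PropExtensionality.
Import ListNotations.

Definition Ff {V : Type} {adj : V -> V -> Prop} (odot : list V -> V -> Pref adj -> list V)
  (w : list V) (z : list V) (s : list (Pref adj)) : list V :=
  fold_left (fun w p => odot w (fst p) (snd p)) (combine z s) w.

Lemma combine_app' {A B : Type} (a1 a2 : list A) (b1 b2 : list B) :
  length a1 = length b1 -> combine (a1 ++ a2) (b1 ++ b2) = combine a1 b1 ++ combine a2 b2.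
Proof.
  revert b1; induction a1 as [|x a1 IH]; intros [|y b1] H; simpl in *; try discriminate; auto.
  rewrite IH; auto.
Qed.

Lemma F_app {V : Type} {adj : V -> V -> Prop} (odot : list V -> V -> Pref adj -> list V)
  w z1 z2 s1 s2 : length z1 = length s1 ->
  Ff odot w (z1 ++ z2) (s1 ++ s2) = Ff odot (Ff odot w z1 s1) z2 s2.
Proof. intro H. unfold Ff. rewrite combine_app' by auto. apply fold_left_app. Qed.

Lemma inW_prefix {V : Type} (eqdec : forall x y : V, {x = y} + {x <> y}) adj a b :
  inW eqdec adj (a ++ b) -> inW eqdec adj a.
Proof.
  intros H i j Hij. specialize (H i j Hij). rewrite !count_occ_app in H. nia.
Qed.

Lemma F_W {V : Type} (eqdec : forall x y : V, {x = y} + {x <> y}) {adj : V -> V -> Prop}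
  (odot : list V -> V -> Pref adj -> list V) (Hadm : admissible eqdec odot) :
  forall w acc s, inW eqdec adj (acc ++ w) -> length s = length w -> Ff odot acc w s = acc ++ w.
Proof.
  induction w as [|a w IH]; intros acc s HW Hl.
  - destruct s; simpl in Hl; try discriminate. unfold Ff; simpl. rewrite app_nil_r; reflexivity.
  - destruct s as [|s0 s]; simpl in Hl; try discriminate.
    unfold Ff; simpl. fold (Ff odot (odot acc a s0) w s).
    assert (Hacc : inW eqdec adj acc) by (eapply inW_prefix; eauto).
    destruct (Hadm acc a s0 Hacc) as [H1 _].
    rewrite H1.
    + replace (acc ++ a :: w) with ((acc ++ [a]) ++ w) in * by (rewrite <- app_assoc; reflexivity).
      apply IH; auto.
    + intros u Hu Hadj. specialize (HW u a Hadj). rewrite !count_occ_app in HW.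
      apply (count_occ_In eqdec) in Hu. simpl in HW.
      destruct (eqdec a a); [|congruence]. nia.
Qed.

Lemma count_del {V : Type} (eqdec : forall x y : V, {x = y} + {x <> y}) :
  forall (l : list V) k x, count_occ eqdec (firstn k l ++ skipn (S k) l) x <= count_occ eqdec l x.
Proof.
  induction l as [|a l IH]; intros [|k] x; simpl.
  - lia.
  - lia.
  - destruct (eqdec a x); lia.
  - specialize (IH k x). change (skipn (S k) l) with (match l with [] => [] | _ :: l0 => skipn k l0 end) in IH.
    destruct (eqdec a x); lia.
Qed.

Lemma even_S n : Nat.even (S n) = negb (Nat.even n).
Proof. rewrite Nat.even_succ, Nat.negb_even. reflexivity. Qed.

Lemma odot_W {V : Type} (eqdec : forall x y : V, {x = y} + {x <> y}) {adj : V -> V -> Prop}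
  (odot : list V -> V -> Pref adj -> list V) (Hadm : admissible eqdec odot)
  (Hsym : forall i j, adj i j -> adj j i) (Hirr : forall i, ~ adj i i) :
  forall w v s, inW eqdec adj w ->
    inW eqdec adj (odot w v s) /\ Nat.even (length (odot w v s)) = negb (Nat.even (length w)).
Proof.
  intros w v s HW. destruct (Hadm w v s HW) as [H1 H2].
  destruct (classic (exists u, In u w /\ adj u v)) as [He|Hn].
  - destruct (H2 He) as [k [Hk [_ Heq]]]. rewrite Heq. split.
    + intros i j Hij. specialize (HW i j Hij).
      pose proof (count_del eqdec w k i). pose proof (count_del eqdec w k j). nia.
    + rewrite length_app, length_firstn, length_skipn.
      destruct (length w) as [|L] eqn:E; [lia|].
      rewrite even_S, Bool.negb_involutive. f_equal. lia.
  - assert (Hnot : forall u, In u w -> ~ adj u v) by (intros u Hu Ha; apply Hn; eauto).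
    rewrite (H1 Hnot). split.
    + intros i j Hij. rewrite !count_occ_app. simpl.
      destruct (eqdec v i) as [<-|Hvi]; destruct (eqdec v j) as [<-|Hvj].
      * exfalso; eapply Hirr; eauto.
      * assert (~ In j w) by (intros Hj; eapply Hnot; eauto).
        apply (count_occ_not_In eqdec) in H. lia.
      * assert (~ In i w) by (intros Hi; eapply Hnot; eauto).
        apply (count_occ_not_In eqdec) in H. lia.
      * specialize (HW i j Hij). lia.
    + rewrite length_app. simpl. rewrite Nat.add_1_r, even_S. reflexivity.
Qed.

Lemma fold_W {V : Type} (eqdec : forall x y : V, {x = y} + {x <> y}) {adj : V -> V -> Prop}
  (odot : list V -> V -> Pref adj -> list V) (Hadm : admissible eqdec odot)
  (Hsym : forall i j, adj i j -> adj j i) (Hirr : forall i, ~ adj i i) :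
  forall cs w, inW eqdec adj w ->
    inW eqdec adj (fold_left (fun w p => odot w (fst p) (snd p)) cs w) /\
    Nat.even (length (fold_left (fun w p => odot w (fst p) (snd p)) cs w) + length cs)
      = Nat.even (length w).
Proof.
  induction cs as [|c cs IH]; intros w HW; simpl.
  - rewrite Nat.add_0_r; auto.
  - destruct (odot_W eqdec odot Hadm Hsym Hirr w (fst c) (snd c) HW) as [HW' Hp].
    destruct (IH _ HW') as [A B]. split; auto.
    rewrite Nat.add_succ_r, even_S, B, Hp, Bool.negb_involutive. reflexivity.
Qed.

Lemma SA' {V : Type} (eqdec : forall x y : V, {x = y} + {x <> y}) {adj : V -> V -> Prop}
  (odot : list V -> V -> Pref adj -> list V) (nu : Pref adj -> R)
  (Hadm : admissible eqdec odot) (Hsub : sub_additive odot nu) :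
  forall s0 w z s, in_supp nu s0 -> inW eqdec adj w -> length z = length s ->
    all_in_supp nu s ->
    length (Ff odot w z s) <= length w + length (Qphi odot z s).
Proof.
  intros s0 w z s Hs0 HW Hl Hs.
  assert (E : Ff odot [] w (repeat s0 (length w)) = w).
  { apply (F_W eqdec odot Hadm); auto. apply repeat_length. }
  rewrite <- E at 1. rewrite <- F_app by (symmetry; apply repeat_length).
  pose proof (Hsub w z (repeat s0 (length w)) s) as H.
  change (Qphi odot (w ++ z) (repeat s0 (length w) ++ s)) with
    (Ff odot [] (w ++ z) (repeat s0 (length w) ++ s)) in H.
  change (Qphi odot w (repeat s0 (length w))) with (Ff odot [] w (repeat s0 (length w))) in H.
  rewrite E in H. apply H; auto.
  - symmetry; apply repeat_length.
  - intros x Hx. apply in_app_or in Hx as [Hx|Hx]; auto.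
    apply repeat_spec in Hx; subst; auto.
Qed.

Lemma erase {V : Type} (eqdec : forall x y : V, {x = y} + {x <> y}) {adj : V -> V -> Prop}
  (odot : list V -> V -> Pref adj -> list V) (nu : Pref adj -> R)
  (Hadm : admissible eqdec odot) (Hsub : sub_additive odot nu)
  (Hsym : forall i j, adj i j -> adj j i) (Hirr : forall i, ~ adj i i)
  (v0 : V) (s0 : Pref adj) (Hs0 : in_supp nu s0) :
  forall zs, (forall z, In z zs -> strong_erasing odot nu z) ->
  forall w s, inW eqdec adj w -> Nat.even (length w) = true -> length w <= 2 * length zs ->
    length s = length (concat zs) -> all_in_supp nu s ->
    Ff odot w (concat zs) s = [].
Proof.
  induction zs as [|z zs IH]; intros Hzs w s HW Hev Hlen Hls Hs.
  - destruct w; simpl in Hlen; [|lia]. unfold Ff. simpl. reflexivity.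
  - destruct (Hzs z (or_introl eq_refl)) as [p [Hzp Hz]].
    simpl concat in *. rewrite length_app in Hls.
    rewrite <- (firstn_skipn (length z) s).
    set (s1 := firstn (length z) s). set (s2 := skipn (length z) s).
    assert (Hl1 : length s1 = length z) by (unfold s1; rewrite length_firstn; lia).
    assert (Hl2 : length s2 = length (concat zs)) by (unfold s2; rewrite length_skipn; lia).
    assert (Hs1 : all_in_supp nu s1).
    { intros x Hx. apply Hs. rewrite <- (firstn_skipn (length z) s). apply in_or_app; auto. }
    assert (Hs2 : all_in_supp nu s2).
    { intros x Hx. apply Hs. rewrite <- (firstn_skipn (length z) s). apply in_or_app; auto. }
    assert (Hss : all_in_supp nu [s0; s0]) by (intros x [<-|[<-|[]]]; auto).
    rewrite F_app by auto.
    destruct (fold_W eqdec odot Hadm Hsym Hirr (combine z s1) w HW) as [HW1 Hev1].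
    fold (Ff odot w z s1) in HW1, Hev1.
    rewrite length_combine, Hl1, Nat.min_id, Hzp, Nat.even_add_mul_2 in Hev1.
    apply IH; auto.
    + intros; apply Hzs; simpl; auto.
    + congruence.
    + destruct w as [|a [|b t]].
      * assert (Ff odot [] z s1 = []) as ->; [|simpl; lia].
        destruct p as [|p].
        { destruct z; simpl in Hzp; try discriminate. reflexivity. }
        destruct (Hz v0 v0 [s0; s0] s1 (Hirr v0) eq_refl ltac:(congruence) Hss Hs1) as [_ H].
        apply (H 0). lia.
      * simpl in Hev. discriminate.
      * set (w := a :: b :: t) in *.
        assert (exists w'' i j, w = w'' ++ [i; j]) as [w'' [i [j Ew]]].
        { assert (Hr : length (rev w) >= 2) by (rewrite length_rev; simpl; lia).
          destruct (rev w) as [|j [|i t']] eqn:Er; simpl in Hr; try lia.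
          exists (rev t'), i, j. rewrite <- (rev_involutive w), Er. simpl.
          rewrite <- app_assoc. reflexivity. }
        assert (Hw'' : inW eqdec adj w'') by (rewrite Ew in HW; eapply inW_prefix; eauto).
        assert (Hij : ~ adj i j).
        { intro Ha. specialize (HW i j Ha). rewrite Ew, !count_occ_app in HW. simpl in HW.
          destruct (eqdec i i); [|congruence]. destruct (eqdec j j); [|congruence].
          destruct (eqdec i j); lia. }
        destruct (Hz i j [s0; s0] s1 Hij eq_refl ltac:(congruence) Hss Hs1) as [H _].
        assert (Ew2 : w = Ff odot w'' [i; j] [s0; s0]).
        { rewrite (F_W eqdec odot Hadm); auto. rewrite <- Ew; auto. }
        rewrite Ew2, <- F_app by reflexivity.
        pose proof (SA' eqdec odot nu Hadm Hsub s0 w'' ([i; j] ++ z) ([s0; s0] ++ s1) Hs0 Hw'')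
          as HSA.
        change (Qphi odot ([i; j] ++ z) ([s0; s0] ++ s1)) with (Qphi odot (i :: j :: z) ([s0; s0] ++ s1)) in HSA. rewrite H in HSA.
        assert (length w = length w'' + 2) by (rewrite Ew, length_app; reflexivity).
        simpl length in Hlen. simpl in HSA.
        refine (Nat.le_trans _ _ _ (HSA _ _) _).
        -- simpl. congruence.
        -- intros x Hx. destruct Hx as [<-|[<-|Hx]]; auto.
        -- unfold w in H0. simpl in H0. lia.
Qed.

Definition Xw {V : Type} {adj : V -> V -> Prop} (om : Omega0 adj) (a b : nat) : list V :=
  flat_map (fun k => [V0 (thetan k om); V1 (thetan k om)]) (seq a b).
Definition Sw {V : Type} {adj : V -> V -> Prop} (om : Omega0 adj) (a b : nat) : list (Pref adj) :=
  flat_map (fun k => [Sg0 (thetan k om); Sg1 (thetan k om)]) (seq a b).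

Lemma XS_len {V : Type} {adj : V -> V -> Prop} (om : Omega0 adj) a b :
  length (Xw om a b) = length (Sw om a b).
Proof.
  unfold Xw, Sw. induction b as [|b IH]; [reflexivity|].
  rewrite seq_S, !flat_map_app, !length_app, IH. reflexivity.
Qed.

Lemma U_fold {V : Type} {adj : V -> V -> Prop} (odot : list V -> V -> Pref adj -> list V) Y om :
  forall n, U odot Y n om = Ff odot (Y om) (Xw om 0 n) (Sw om 0 n).
Proof.
  induction n as [|n IH]; [reflexivity|].
  simpl U. rewrite IH. unfold Xw, Sw. rewrite seq_S, !flat_map_app.
  rewrite F_app by apply XS_len. reflexivity.
Qed.

Lemma XS_split {V : Type} {adj : V -> V -> Prop} (om : Omega0 adj) n m :
  Xw om 0 (n + m) = Xw om 0 n ++ Xw om n m /\ Sw om 0 (n + m) = Sw om 0 n ++ Sw om n m.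
Proof. unfold Xw, Sw. rewrite seq_app, !flat_map_app. split; reflexivity. Qed.

Lemma flat_map_shift {A : Type} (g : nat -> list A) : forall m n,
  flat_map g (seq n m) = flat_map (fun k => g (k + n)) (seq 0 m).
Proof.
  induction m as [|m IH]; intros n; [reflexivity|].
  rewrite !seq_S, !flat_map_app, IH. simpl. rewrite Nat.add_comm. reflexivity.
Qed.

Lemma thetan_add {V : Type} {adj : V -> V -> Prop} (om : Omega0 adj) k n :
  thetan k (thetan n om) = thetan (k + n) om.
Proof. unfold thetan. rewrite Nat.iter_add. reflexivity. Qed.

Lemma Bev_X {V : Type} {adj : V -> V -> Prop} (om : Omega0 adj) zs m n :
  Bev zs m (thetan n om) -> Xw om n m = concat zs.
Proof.
  unfold Bev, Xw. intros H. rewrite <- H, flat_map_shift.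
  apply flat_map_ext. intros k. rewrite !thetan_add. reflexivity.
Qed.

Lemma thetan_coord {V : Type} {adj : V -> V -> Prop} (om : Omega0 adj) : forall k j,
  thetan k om j = om (j + Z.of_nat k)%Z.
Proof.
  induction k as [|k IH]; intros j.
  - simpl. f_equal. lia.
  - change (thetan (S k) om) with (theta (thetan k om)). unfold theta. rewrite IH. f_equal. lia.
Qed.

Lemma pred_ext {T : Type} (E E' : T -> Prop) : (forall x, E x <-> E' x) -> E = E'.
Proof. intros H. apply functional_extensionality; intro x. apply propositional_extensionality; auto. Qed.

Lemma sa_empty {T : Type} (F : (T -> Prop) -> Prop) : sigma_algebra F -> F (fun _ => False).
Proof.
  intros [H1 [H2 H3]]. replace (fun _ : T => False) with (fun t : T => ~ (fun _ => True) t).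
  - apply H2; auto.
  - apply pred_ext; intros; simpl; tauto.
Qed.

Lemma sa_union2 {T : Type} (F : (T -> Prop) -> Prop) A B : sigma_algebra F -> F A -> F B ->
  F (fun t => A t \/ B t).
Proof.
  intros HF HA HB. pose proof HF as [_ [_ H3]].
  replace (fun t => A t \/ B t) with
    (fun t => exists n, (fun n => match n with 0 => A | _ => B end) n t).
  - apply H3. intros [|n]; auto.
  - apply pred_ext; intros t; split.
    + intros [[|n] H]; auto.
    + intros [H|H]; [exists 0|exists 1]; auto.
Qed.

Lemma sa_list_union {T X : Type} (F : (T -> Prop) -> Prop) (A : X -> T -> Prop) :
  sigma_algebra F -> forall l, (forall x, In x l -> F (A x)) ->
  F (fun t => exists x, In x l /\ A x t).
Proof.
  intros HF l; induction l as [|a l IH]; intros H.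
  - replace (fun t => exists x, In x [] /\ A x t) with (fun _ : T => False).
    + apply sa_empty; auto.
    + apply pred_ext; intros t; split; [tauto|]. intros [x [[] _]].
  - replace (fun t => exists x, In x (a :: l) /\ A x t) with
      (fun t => A a t \/ (fun t => exists x, In x l /\ A x t) t).
    + apply sa_union2; auto. apply H; simpl; auto. apply IH. intros; apply H; simpl; auto.
    + apply pred_ext; intros t; split.
      * intros [H1|[x [Hx H2]]]; [exists a|exists x]; simpl; auto.
      * intros [x [[<-|Hx] H2]]; [left; auto|right; exists x; auto].
Qed.

Lemma meas_empty {V : Type} {adj : V -> V -> Prop} : measurable (adj := adj) (fun _ => False).
Proof. intros F HF _. apply sa_empty; auto. Qed.

Lemma meas_union2 {V : Type} {adj : V -> V -> Prop} (A B : Omega0 adj -> Prop) :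
  measurable A -> measurable B -> measurable (fun t => A t \/ B t).
Proof. intros HA HB F HF Hg. apply sa_union2; [auto|apply HA|apply HB]; auto. Qed.

Lemma meas_compl {V : Type} {adj : V -> V -> Prop} (A : Omega0 adj -> Prop) :
  measurable A -> measurable (fun t => ~ A t).
Proof. intros HA F HF Hg. apply HF. apply HA; auto. Qed.

Lemma meas_inter {V : Type} {adj : V -> V -> Prop} (A B : Omega0 adj -> Prop) :
  measurable A -> measurable B -> measurable (fun t => A t /\ B t).
Proof.
  intros HA HB. replace (fun t => A t /\ B t) with (fun t => ~ (fun t => ~ A t \/ ~ B t) t).
  - apply meas_compl, meas_union2; apply meas_compl; auto.
  - apply pred_ext; intros t; simpl. tauto.
Qed.

Lemma meas_ext {V : Type} {adj : V -> V -> Prop} (A B : Omega0 adj -> Prop) :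
  (forall t, A t <-> B t) -> measurable A -> measurable B.
Proof. intros H. rewrite (pred_ext A B H). auto. Qed.

Lemma meas_coord {V : Type} {adj : V -> V -> Prop} (lc : list (coord adj))
  (Hlc : forall c, In c lc) (k : Z) (Q : coord adj -> Prop) :
  measurable (fun om : Omega0 adj => Q (om k)).
Proof.
  intros F HF Hg.
  replace (fun om : Omega0 adj => Q (om k)) with
    (fun om => exists c, In c lc /\ (fun c om => Q c /\ om k = c) c om).
  - apply sa_list_union; auto. intros c _.
    destruct (classic (Q c)) as [Hq|Hq].
    + rewrite (pred_ext _ (fun om : Omega0 adj => om k = c)) by (intros; tauto). auto.
    + rewrite (pred_ext _ (fun _ : Omega0 adj => False)) by (intros; tauto).
      apply sa_empty; auto.
  - apply pred_ext; intros om; split.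
    + intros [c [_ [H ->]]]; auto.
    + intros H; exists (om k); auto.
Qed.

Lemma P_ext {V : Type} {adj : V -> V -> Prop} (P : (Omega0 adj -> Prop) -> R) A B :
  (forall t, A t <-> B t) -> P A = P B.
Proof. intros H. rewrite (pred_ext A B H). reflexivity. Qed.

Lemma P_empty {V : Type} {adj : V -> V -> Prop} (P : (Omega0 adj -> Prop) -> R) :
  probability P -> P (fun _ => False) = 0%R.
Proof.
  intros [_ [_ Hadd]].
  specialize (Hadd (fun _ => fun _ => False) (fun _ => meas_empty) (fun _ _ _ _ H _ => H)).
  cbv beta in Hadd.
  rewrite (P_ext P (fun om => exists n : nat, False) (fun _ => False)) in Hadd
    by (intros; split; [intros [_ []]|tauto]).
  set (c := P (fun _ => False)) in *.
  destruct (Req_dec c 0) as [|Hc]; auto. exfalso.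
  assert (Hpos : (0 < Rabs c)%R) by (apply Rabs_pos_lt; auto).
  destruct (Hadd (Rabs c) Hpos) as [N HN].
  specialize (HN (S N) ltac:(lia)). rewrite sum_cte in HN. unfold R_dist in HN.
  replace (c * INR (S (S N)) - c)%R with (c * INR (S N))%R in HN
    by (rewrite (S_INR (S N)); ring).
  rewrite Rabs_mult, (Rabs_pos_eq (INR (S N))) in HN by apply pos_INR.
  rewrite S_INR in HN. pose proof (pos_INR N). nra.
Qed.

Lemma P_add2 {V : Type} {adj : V -> V -> Prop} (P : (Omega0 adj -> Prop) -> R) A B :
  probability P -> measurable A -> measurable B -> (forall t, A t -> B t -> False) ->
  P (fun t => A t \/ B t) = (P A + P B)%R.
Proof.
  intros HP HA HB Hd. pose proof (P_empty P HP) as He. destruct HP as [_ [_ Hadd]].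
  set (E := fun n : nat => match n with 0 => A | 1 => B | _ => fun _ : Omega0 adj => False end).
  assert (HE : forall n, measurable (E n)) by (intros [|[|n]]; simpl; auto using meas_empty).
  assert (Hdis : forall n m om, n <> m -> E n om -> E m om -> False).
  { intros [|[|n]] [|[|m]] om Hnm; simpl; intros H1 H2; try tauto; try congruence;
    eapply Hd; eauto. }
  specialize (Hadd E HE Hdis).
  rewrite (P_ext P (fun om => exists n, E n om) (fun t => A t \/ B t)) in Hadd.
  - apply (uniqueness_sum _ _ _ Hadd). intros eps Heps. exists 1%nat. intros n Hn.
    assert (sum_f_R0 (fun n => P (E n)) n = P A + P B)%R.
    { destruct n as [|n]; [lia|]. clear Hn. induction n as [|n IH].
      - reflexivity.
      - simpl sum_f_R0. simpl in IH. rewrite IH. simpl. rewrite He. ring. }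
    rewrite H. unfold R_dist. rewrite Rminus_diag, Rabs_R0. auto.
  - intros t; split.
    + intros [[|[|n]] H]; simpl in H; tauto.
    + intros [H|H]; [exists 0%nat|exists 1%nat]; auto.
Qed.

Lemma null_union2 {V : Type} {adj : V -> V -> Prop} (P : (Omega0 adj -> Prop) -> R) A B :
  probability P -> null P A -> null P B -> null P (fun t => A t \/ B t).
Proof.
  intros HP [HA PA] [HB PB]. pose proof HP as [_ [Hpos _]].
  assert (HBA : measurable (fun t => B t /\ ~ A t)) by (apply meas_inter; auto; apply meas_compl; auto).
  split; [apply meas_union2; auto|].
  rewrite (P_ext P _ (fun t => A t \/ (B t /\ ~ A t))) by (intros; tauto).
  rewrite P_add2; auto; [|intros t ? [? ?]; tauto].
  assert (PB' : P B = (P (fun t => (B t /\ ~ A t) \/ (A t /\ B t))))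
    by (apply P_ext; intros; tauto).
  rewrite P_add2 in PB'; auto; [|apply meas_inter; auto|intros t [? ?] [? ?]; tauto].
  pose proof (Hpos _ HBA). pose proof (Hpos (fun t => A t /\ B t) ltac:(apply meas_inter; auto)).
  lra.
Qed.

Lemma null_list_union {V : Type} {adj : V -> V -> Prop} (P : (Omega0 adj -> Prop) -> R)
  {X : Type} (A : X -> Omega0 adj -> Prop) :
  probability P -> forall l, (forall x, In x l -> null P (A x)) ->
  null P (fun t => exists x, In x l /\ A x t).
Proof.
  intros HP l; induction l as [|a l IH]; intros H.
  - split.
    2:{ rewrite (P_ext P _ (fun _ => False)) by (intros; split; [intros [x [[] _]]|tauto]).
        apply P_empty; auto. }
    apply (meas_ext (fun _ => False)); [|apply meas_empty]. intros; split; [tauto|intros [x [[] _]]].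
  - assert (Hn : null P (fun t => A a t \/ (exists x, In x l /\ A x t))).
    { apply null_union2; auto. apply H; simpl; auto. apply IH; intros; apply H; simpl; auto. }
    replace (fun t => exists x, In x (a :: l) /\ A x t) with
      (fun t => A a t \/ (exists x, In x l /\ A x t)); auto.
    apply pred_ext; intros t; split.
    + intros [H1|[x [Hx H2]]]; [exists a|exists x]; simpl; auto.
    + intros [x [[<-|Hx] H2]]; [left; auto|right; exists x; auto].
Qed.

Fixpoint lists {V : Type} (L : list V) (n : nat) : list (list V) :=
  match n with
  | O => [[]]
  | S n => [] :: flat_map (fun x => map (cons x) (lists L n)) L
  end.

Lemma lists_spec {V : Type} (L : list V) (HL : forall v, In v L) :
  forall n l, length l <= n -> In l (lists L n).
Proof.
  induction n as [|n IH]; intros [|a l] Hl; simpl in *; auto; try lia.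
  right. apply in_flat_map. exists a; split; auto. apply in_map. apply IH; lia.
Qed.

Fixpoint funs {V : Type} (eqdec : forall x y : V, {x = y} + {x <> y}) (LL : list (list V))
  (K : list V) : list (V -> list V) :=
  match K with
  | [] => [fun _ => []]
  | a :: K => flat_map (fun vl => map (fun g x => if eqdec x a then vl else g x)
                                     (funs eqdec LL K)) LL
  end.

Lemma funs_spec {V : Type} (eqdec : forall x y : V, {x = y} + {x <> y}) (LL : list (list V))
  (g : V -> list V) (Hg : forall x, In (g x) LL) :
  forall K, exists h, In h (funs eqdec LL K) /\ forall x, In x K -> h x = g x.
Proof.
  induction K as [|a K IH].
  - exists (fun _ => []). simpl. split; auto. intros x [].
  - destruct IH as [h [Hh Hag]].
    exists (fun x => if eqdec x a then g a else h x). split.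
    + simpl. apply in_flat_map. exists (g a). split; auto. apply in_map with (f := fun g0 x => if eqdec x a then g a else g0 x). auto.
    + intros x Hx. destruct (eqdec x a) as [->|Hne]; auto.
      destruct Hx as [->|Hx]; [congruence|auto].
Qed.

Lemma Pref_cover {V : Type} (eqdec : forall x y : V, {x = y} + {x <> y}) (adj : V -> V -> Prop)
  (L : list V) (HL : forall v, In v L) : exists lp : list (Pref adj), forall s, In s lp.
Proof.
  set (LL := lists L (length L)).
  exists (flat_map (fun h => match excluded_middle_informative (valid_pref adj h) with
                    | left p => [exist _ h p] | right _ => [] end) (funs eqdec LL L)).
  intros [h p].
  assert (Hg : forall x, In (h x) LL).
  { intros x. apply lists_spec; auto. destruct (p x) as [Hnd _].
    apply NoDup_incl_length; auto. intros y _; auto. }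
  destruct (funs_spec eqdec LL h Hg L) as [h' [Hh' Hag]].
  assert (h' = h) by (apply functional_extensionality; auto). subst h'.
  apply in_flat_map. exists h. split; auto.
  destruct (excluded_middle_informative (valid_pref adj h)) as [p'|np].
  - rewrite (proof_irrelevance _ p p'). simpl; auto.
  - contradiction.
Qed.

Lemma coord_cover {V : Type} (eqdec : forall x y : V, {x = y} + {x <> y}) (adj : V -> V -> Prop)
  (L : list V) (HL : forall v, In v L) : exists lc : list (coord adj), forall c, In c lc.
Proof.
  destruct (Pref_cover eqdec adj L HL) as [lp Hlp].
  exists (flat_map (fun a => flat_map (fun s => flat_map (fun b => map (fun t => Coord a s b t) lp) L) lp) L).
  intros [a s b t]. apply in_flat_map; exists a; split; auto.
  apply in_flat_map; exists s; split; auto.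
  apply in_flat_map; exists b; split; auto.
  apply in_map; auto.
Qed.

Lemma Xw_len {V : Type} {adj : V -> V -> Prop} (om : Omega0 adj) a b :
  length (Xw om a b) = 2 * b.
Proof.
  unfold Xw. induction b as [|b IH]; [reflexivity|].
  rewrite seq_S, flat_map_app, length_app, IH. simpl. lia.
Qed.

Theorem mainTheorem13
  (V : Type) (eqdec : forall x y : V, {x = y} + {x <> y}) (adj : V -> V -> Prop)
  (HG : simple_finite_connected_graph adj)
  (odot : list V -> V -> Pref adj -> list V) (nu : Pref adj -> R)
  (P : (Omega0 adj -> Prop) -> R) (mu0 mu1 : V -> R)
  (HH : H1' P mu0 mu1 nu)
  (Hadm : admissible eqdec odot)
  (Hsub : sub_additive odot nu)
  (r : nat) (Hr : (1 <= r)%nat)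
  (zs : list (list V)) (Hzs_len : length zs = r)
  (Hzs : forall z, In z zs -> strong_erasing odot nu z) :
  forall (Y : Omega0 adj -> list V), in_Y2r eqdec P r Y ->
  forall n : nat, (1 <= n)%nat ->
    subset_ae P (Cev odot zs n) (Aev odot Y (n + half_total_length zs)).
Proof.
  intros Y HY n Hn.
  destruct HY as [_ [HYW [NY [HNY HYlen]]]].
  destruct HG as [[L HL] [Hsym [Hirr _]]].
  destruct HH as [Hprob [_ [_ [_ [_ [Hnu0 [Hnu1 _]]]]]]].
  pose proof Hprob as [_ [HPpos _]].
  destruct (Pref_cover eqdec adj L HL) as [lp Hlp].
  destruct (coord_cover eqdec adj L HL) as [lc Hlc].
  set (m := half_total_length zs). set (K := n + m).
  set (T0 := fun k s (om : Omega0 adj) => cS0 (om (Z.of_nat k)) = s /\ (nu s <= 0)%R).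
  set (T1 := fun k s (om : Omega0 adj) => cS1 (om (Z.of_nat k)) = s /\ (nu s <= 0)%R).
  assert (HT : forall k s, null P (T0 k s) /\ null P (T1 k s)).
  { intros k s. split; split.
    - apply (meas_coord lc Hlc (Z.of_nat k) (fun c => cS0 c = s /\ (nu s <= 0)%R)).
    - destruct (Rle_dec (nu s) 0) as [Hle|Hnle].
      + rewrite (P_ext P (T0 k s) (fun om => cS0 (om (Z.of_nat k)) = s))
          by (intros; unfold T0; tauto).
        rewrite Hnu0. apply Rle_antisym; auto. rewrite <- (Hnu0 (Z.of_nat k)). apply HPpos.
        apply (meas_coord lc Hlc _ (fun c => cS0 c = s)).
      + rewrite (P_ext P (T0 k s) (fun _ => False)) by (unfold T0; intros; tauto).
        apply P_empty; auto.
    - apply (meas_coord lc Hlc (Z.of_nat k) (fun c => cS1 c = s /\ (nu s <= 0)%R)).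
    - destruct (Rle_dec (nu s) 0) as [Hle|Hnle].
      + rewrite (P_ext P (T1 k s) (fun om => cS1 (om (Z.of_nat k)) = s))
          by (intros; unfold T1; tauto).
        rewrite Hnu1. apply Rle_antisym; auto. rewrite <- (Hnu1 (Z.of_nat k)). apply HPpos.
        apply (meas_coord lc Hlc _ (fun c => cS1 c = s)).
      + rewrite (P_ext P (T1 k s) (fun _ => False)) by (unfold T1; intros; tauto).
        apply P_empty; auto. }
  exists (fun om => NY om \/ (exists k, In k (seq 0 K) /\
                     exists s, In s lp /\ (T0 k s om \/ T1 k s om))).
  split.
  { apply null_union2; auto.
    apply (null_list_union P (fun k om => exists s, In s lp /\ (T0 k s om \/ T1 k s om))); auto.
    intros k _. apply (null_list_union P (fun s om => T0 k s om \/ T1 k s om)); auto.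
    intros s _. apply null_union2; auto; apply HT. }
  intros om [HA HB] HN.
  assert (HNY' : ~ NY om) by tauto.
  assert (Hgood : forall k, k < K ->
            in_supp nu (Sg0 (thetan k om)) /\ in_supp nu (Sg1 (thetan k om))).
  { intros k Hk. unfold Sg0, Sg1. rewrite !thetan_coord, Z.add_0_l.
    split; apply NNPP; intro Hs; apply HN; right; exists k; (split; [apply in_seq; lia|]).
    - exists (cS0 (om (Z.of_nat k))); split; auto. left; split; auto.
      apply Rnot_lt_le; auto.
    - exists (cS1 (om (Z.of_nat k))); split; auto. right; split; auto.
      apply Rnot_lt_le; auto. }
  assert (Hsupp : forall a b, a + b <= K -> all_in_supp nu (Sw om a b)).
  { intros a b Hab s Hs. unfold Sw in Hs. apply in_flat_map in Hs as [k [Hk Hs]].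
    apply in_seq in Hk. destruct (Hgood k ltac:(lia)) as [G0 G1].
    destruct Hs as [<-|[<-|[]]]; auto. }
  set (s0 := Sg0 (thetan 0 om)).
  assert (Hs0 : in_supp nu s0) by (apply (Hgood 0); unfold K; lia).
  unfold Aev. fold m.
  rewrite U_fold. unfold K. destruct (XS_split om n m) as [E1 E2]. rewrite E1, E2, F_app by apply XS_len.
  rewrite <- (U_fold odot Y om n).
  destruct (HYW om) as [HYW1 HYev].
  destruct (fold_W eqdec odot Hadm Hsym Hirr (combine (Xw om 0 n) (Sw om 0 n)) (Y om) HYW1)
    as [HW0 Hev0].
  fold (Ff odot (Y om) (Xw om 0 n) (Sw om 0 n)) in HW0, Hev0.
  rewrite <- U_fold in HW0, Hev0.
  rewrite length_combine, <- XS_len, Nat.min_id, Xw_len, Nat.even_add_mul_2 in Hev0.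
  rewrite (Bev_X om zs m n HB).
  apply (erase eqdec odot nu Hadm Hsub Hsym Hirr (V0 om) s0 Hs0 zs Hzs).
  - exact HW0.
  - rewrite Hev0. apply Nat.even_spec; auto.
  - rewrite U_fold.
    refine (Nat.le_trans _ _ _ (SA' eqdec odot nu Hadm Hsub s0 (Y om) (Xw om 0 n) (Sw om 0 n)
                                 Hs0 HYW1 (XS_len om 0 n) (Hsupp 0 n ltac:(unfold K; lia))) _).
    change (Qphi odot (Xw om 0 n) (Sw om 0 n)) with (Ff odot ((fun _ => []) om) (Xw om 0 n) (Sw om 0 n)).
    rewrite <- U_fold. unfold Aev in HA. rewrite HA. simpl.
    rewrite Nat.add_0_r, Hzs_len. auto.
  - rewrite <- (Bev_X om zs m n HB). symmetry; apply XS_len.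
  - apply Hsupp. unfold K; lia.
Qed.
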